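(* Let $f\in\mathbb{C}[[y,t,x]]$, $\lambda\in\mathbb{C}$, and let $P:\mathbb{C}\to\mathbb{C}$ be a monic polynomial. Then there exist $g,h\in\mathbb{C}[[y,t,x]]$ such that $\operatorname{Conv}_\varphi(g)=P^{-1}(\operatorname{Conv}_\varphi(f))$ and $\operatorname{Conv}_\varphi(h)=\lambda\cdot\operatorname{Conv}_\varphi(f)=\{\lambda s: s\in\operatorname{Conv}_\varphi(f)\}$.
   Context: Let $x=(x_1,\dots,x_n)$. A formal power series is convergent if its coefficients satisfy $|a_\alpha|\le C^{|\alpha|}$ for some $C$ and all $\alpha\ne0$. Fix a convergent power series $\varphi(t,x)=\sum_{j\ge1}b_j(x)t^j$ with convergent $b_j(x)\in\mathbb{C}[[x]]$ and $b_1(0)=1$. For $s\in\mathbb{C}$ put $\varphi(s,t,x)=s\,b_1(x)t+\sum_{j\ge2}b_j(x)t^j$. For $f\in\mathbb{C}[[y,t,x]]$, $\operatorname{Conv}_\varphi(f)=\{s\in\mathbb{C}: f(\varphi(s,t,x),t,x)\text{ converges as a power series in }(t,x)\}$. *)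

(* Defs.v *)
(* complex numbers as pairs of Stdlib reals; formal power
   series in N variables as functions from multi-indices (lists of
   naturals of length N) to CC. *)
From Stdlib Require Import Reals List.
Import ListNotations.
Open Scope R_scope.

Record CC := mkC { Re : R; Im : R }.
Definition Czero : CC := mkC 0 0.
Definition Cone : CC := mkC 1 0.
Definition Cadd (a b : CC) : CC := mkC (Re a + Re b) (Im a + Im b).
Definition Cmul (a b : CC) : CC :=
  mkC (Re a * Re b - Im a * Im b) (Re a * Im b + Im a * Re b).
Definition Cnorm (a : CC) : R := sqrt (Re a ^ 2 + Im a ^ 2).
Definition Csum (l : list CC) : CC := fold_right Cadd Czero l.

Definition mi_size (a : list nat) : nat := fold_right Nat.add 0%nat a.
Definition mi_is_zero (a : list nat) : bool := forallb (Nat.eqb 0) a.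
(* componentwise (truncated) difference *)
Fixpoint mi_sub (b a : list nat) : list nat :=
  match b, a with
  | x :: b', y :: a' => (x - y)%nat :: mi_sub b' a'
  | _, _ => b
  end.
Fixpoint mi_below (b : list nat) : list (list nat) :=
  match b with
  | [] => [[]]
  | x :: b' => flat_map (fun i => map (cons i) (mi_below b')) (seq 0 (S x))
  end.

(* a series in N variables: only its values on lists of length N matter *)
Definition PS := list nat -> CC.

Definition Convergent (N : nat) (F : PS) : Prop :=
  exists K : R, forall a : list nat, length a = N -> mi_is_zero a = false ->
    Cnorm (F a) <= K ^ (mi_size a).

Definition PSone : PS := fun a => if mi_is_zero a then Cone else Czero.
Definition PSmul (F G : PS) : PS :=
  fun b => Csum (map (fun a => Cmul (F a) (G (mi_sub b a))) (mi_below b)).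
Fixpoint PSpow (F : PS) (i : nat) : PS :=
  match i with O => PSone | S i' => PSmul F (PSpow F i') end.

(* b j is the series b_j(x) in the n variables x (b 0 is ignored).
   Series in (t,x) are indexed by (k :: alpha). *)
Definition phiTX (b : nat -> PS) : PS :=
  fun g => match g with
           | (S j) :: a => b (S j) a
           | _ => Czero
           end.

Definition phiS (b : nat -> PS) (s : CC) : PS :=
  fun g => match g with
           | 1%nat :: a => Cmul s (b 1%nat a)
           | (S (S j)) :: a => b (S (S j)) a
           | _ => Czero
           end.

(* f(phi(s,t,x),t,x) for f in CC[[y,t,x]] (indexed by (i :: k :: alpha)).
   The coefficient of t^m x^beta is the finite sum
     sum_{i <= m} sum_{(k,alpha) <= (m,beta)} f_{i,k,alpha} [t^{m-k} x^{beta-alpha}] phi(s)^i ;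
   terms with i > m vanish since phi(s) is divisible by t. *)
Definition compose (b : nat -> PS) (f : PS) (s : CC) : PS :=
  fun g => match g with
           | [] => Czero
           | m :: _ =>
             Csum (flat_map (fun i =>
               map (fun d => Cmul (f (i :: d)) (PSpow (phiS b s) i (mi_sub g d)))
                   (mi_below g)) (seq 0 (S m)))
           end.

Definition Conv (n : nat) (b : nat -> PS) (f : PS) (s : CC) : Prop :=
  Convergent (S n) (compose b f s).

(* monic polynomial with lower coefficients cs = [c_0; ...; c_{d-1}]:
   P(s) = c_0 + c_1 s + ... + c_{d-1} s^{d-1} + s^d *)
Fixpoint monic_eval (cs : list CC) (s : CC) : CC :=
  match cs with
  | [] => Cone
  | c :: cs' => Cadd c (Cmul s (monic_eval cs' s))
  end.

(* Main.v *)
Require Import Defs.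
From Stdlib Require Import Reals List Lra Lia Arith Ring Classical.
Import ListNotations.
Open Scope R_scope.


Lemma CC_ext : forall a b : CC, Re a = Re b -> Im a = Im b -> a = b.
Proof. intros [a1 a2] [b1 b2]; simpl; intros; subst; reflexivity. Qed.

Definition Copp (a : CC) : CC := mkC (- Re a) (- Im a).
Definition Csub (a b : CC) : CC := Cadd a (Copp b).

Lemma CCth : ring_theory Czero Cone Cadd Cmul Csub Copp (@eq CC).
Proof.
  constructor; intros; apply CC_ext; unfold Cadd, Cmul, Csub, Copp, Czero, Cone; simpl; ring.
Qed.
Add Ring CCring : CCth.

Fixpoint Cpow (s : CC) (m : nat) : CC :=
  match m with O => Cone | S m' => Cmul s (Cpow s m') end.

Fixpoint peval (p : list CC) (s : CC) : CC :=
  match p with [] => Czero | a :: p' => Cadd a (Cmul s (peval p' s)) end.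
Definition pcoef (p : list CC) (e : nat) : CC := nth e p Czero.
Fixpoint padd (p q : list CC) : list CC :=
  match p, q with
  | [], _ => q
  | _, [] => p
  | a :: p', c :: q' => Cadd a c :: padd p' q'
  end.
Definition pscale (a : CC) (p : list CC) : list CC := map (Cmul a) p.
Definition pshift (l : list CC) : list CC :=
  match l with [] => [] | _ => Czero :: l end.
Fixpoint pmul (p q : list CC) : list CC :=
  match p with [] => [] | a :: p' => padd (pscale a q) (pshift (pmul p' q)) end.
Fixpoint psum (l : list (list CC)) : list CC :=
  match l with [] => [] | p :: l' => padd p (psum l') end.
Fixpoint pcomp (p P : list CC) : list CC :=
  match p with [] => [] | a :: p' => padd [a] (pmul P (pcomp p' P)) end.
Fixpoint pscv (c : CC) (p : list CC) : list CC :=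
  match p with [] => [] | a :: p' => a :: pscale c (pscv c p') end.

Lemma peval_padd : forall p q s, peval (padd p q) s = Cadd (peval p s) (peval q s).
Proof. induction p; destruct q; intros; simpl; try rewrite IHp; ring. Qed.
Lemma peval_pscale : forall a p s, peval (pscale a p) s = Cmul a (peval p s).
Proof. induction p; intros; simpl in *; try rewrite IHp; ring. Qed.
Lemma peval_pshift : forall l s, peval (pshift l) s = Cmul s (peval l s).
Proof. destruct l; intros; simpl; ring. Qed.
Lemma peval_pmul : forall p q s, peval (pmul p q) s = Cmul (peval p s) (peval q s).
Proof. induction p; intros; cbn [pmul]. simpl; ring.
  rewrite peval_padd, peval_pscale, peval_pshift, IHp. simpl; ring. Qed.
Lemma peval_pcomp : forall p P s, peval (pcomp p P) s = peval p (peval P s).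
Proof. induction p; intros; cbn [pcomp]. simpl; ring.
  rewrite peval_padd, peval_pmul, IHp. simpl. ring. Qed.
Lemma peval_pscv : forall c p s, peval (pscv c p) s = peval p (Cmul c s).
Proof. induction p; intros; simpl. ring.
  rewrite peval_pscale, IHp. ring. Qed.
Lemma peval_psum : forall l s, peval (psum l) s = Csum (map (fun p => peval p s) l).
Proof. induction l; intros; cbn [psum]. simpl; ring. rewrite peval_padd, IHl. simpl; ring. Qed.

Lemma pcoef_nil : forall e, pcoef [] e = Czero.
Proof. destruct e; reflexivity. Qed.
Lemma pcoef_padd : forall p q e, pcoef (padd p q) e = Cadd (pcoef p e) (pcoef q e).
Proof. induction p; destruct q; intros; simpl; try (rewrite pcoef_nil; ring).
  - unfold pcoef in *; destruct e; simpl. reflexivity. apply IHp.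
Qed.
Lemma pcoef_pscale : forall a p e, pcoef (pscale a p) e = Cmul a (pcoef p e).
Proof. induction p; intros. simpl; rewrite pcoef_nil; ring. unfold pcoef in *; simpl.
  destruct e; simpl. reflexivity. apply IHp. Qed.
Lemma pcoef_pshift0 : forall l, pcoef (pshift l) 0 = Czero.
Proof. destruct l; reflexivity. Qed.
Lemma pcoef_pshiftS : forall l e, pcoef (pshift l) (S e) = pcoef l e.
Proof. destruct l; intros; unfold pcoef; simpl; auto. destruct e; reflexivity. Qed.
Lemma pcoef_psum : forall l e, pcoef (psum l) e = Csum (map (fun p => pcoef p e) l).
Proof. induction l; intros; cbn [psum]. apply pcoef_nil. rewrite pcoef_padd, IHl. reflexivity. Qed.

Lemma pmul_zero_r : forall p q, (forall e, pcoef q e = Czero) -> forall e, pcoef (pmul p q) e = Czero.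
Proof. induction p; intros q Hq e; cbn [pmul]. apply pcoef_nil.
  rewrite pcoef_padd, pcoef_pscale, Hq. destruct e.
  rewrite pcoef_pshift0; ring. rewrite pcoef_pshiftS, IHp; auto; ring. Qed.

Lemma pmul_nil_r : forall p, pmul p [] = [].
Proof. induction p; simpl; auto. rewrite IHp; reflexivity. Qed.

Lemma length_padd : forall p q, length (padd p q) = Nat.max (length p) (length q).
Proof. induction p; destruct q; simpl; auto. Qed.

Lemma length_pmul : forall p q, (length (pmul p q) <= Nat.pred (length p + length q))%nat.
Proof. induction p; intros; cbn [pmul]. simpl; lia.
  destruct q. rewrite pmul_nil_r. simpl. lia.
  rewrite length_padd. unfold pscale. rewrite length_map.
  specialize (IHp (c :: q)). destruct (pmul p (c::q)) eqn:E; simpl in *. lia. lia. Qed.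

Lemma length_psum : forall l k, (forall p, In p l -> (length p <= k)%nat) -> (length (psum l) <= k)%nat.
Proof. induction l; intros; cbn [psum]. simpl; lia. rewrite length_padd.
  assert (length a <= k)%nat by (apply H; left; auto).
  assert (length (psum l) <= k)%nat by (apply IHl; intros; apply H; right; auto). lia. Qed.

Lemma length_pcomp : forall p P d, length P = S d ->
  (length (pcomp p P) <= S (d * Nat.pred (length p)))%nat.
Proof. induction p; intros P d HP; cbn [pcomp]. simpl; lia.
  destruct p as [|a' p'].
  - cbn [pcomp]. rewrite pmul_nil_r. simpl. lia.
  - rewrite length_padd. pose proof (length_pmul P (pcomp (a'::p') P)).
    specialize (IHp P d HP). remember (pcomp (a'::p') P) as r.
    rewrite HP in H. simpl length in *. simpl Nat.pred in *. nia. Qed.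

Lemma length_pscv : forall c p, length (pscv c p) = length p.
Proof. induction p; simpl; auto. unfold pscale; rewrite length_map; auto. Qed.

Lemma peval_zero : forall q s, (forall e, pcoef q e = Czero) -> peval q s = Czero.
Proof. induction q; intros; simpl. reflexivity.
  assert (a = Czero) by exact (H 0%nat). subst a.
  rewrite IHq. ring. intros e. apply (H (S e)). Qed.

Lemma peval_coef_ext : forall p q s, (forall e, pcoef p e = pcoef q e) -> peval p s = peval q s.
Proof. induction p; intros q s H.
  - simpl. symmetry. apply peval_zero. intros. rewrite <- H. apply pcoef_nil.
  - destruct q.
    + rewrite (peval_zero (a::p)). reflexivity. intros; rewrite H; apply pcoef_nil.
    + simpl. rewrite (IHp q s). pose proof (H 0%nat). unfold pcoef in H0; simpl in H0. rewrite H0. reflexivity.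
      intros e. apply (H (S e)).
Qed.

Lemma monic_peval : forall cs s, monic_eval cs s = peval (cs ++ [Cone]) s.
Proof. induction cs; intros; simpl. ring. rewrite IHcs. reflexivity. Qed.

Lemma Csum_app : forall l1 l2, Csum (l1 ++ l2) = Cadd (Csum l1) (Csum l2).
Proof. induction l1; intros; simpl. ring. rewrite IHl1; ring. Qed.
Lemma Csum_flat_map : forall {A B} (F : B -> CC) (G : A -> list B) l,
  Csum (map F (flat_map G l)) = Csum (map (fun i => Csum (map F (G i))) l).
Proof. induction l; simpl; auto. rewrite map_app, Csum_app, IHl. reflexivity. Qed.
Lemma Csum_map_add : forall {A} (F G : A -> CC) l,
  Csum (map (fun x => Cadd (F x) (G x)) l) = Cadd (Csum (map F l)) (Csum (map G l)).
Proof. induction l; simpl. ring. rewrite IHl; ring. Qed.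
Lemma Csum_ext_in : forall {A} (F G : A -> CC) l, (forall x, In x l -> F x = G x) ->
  Csum (map F l) = Csum (map G l).
Proof. intros. f_equal. apply map_ext_in. auto. Qed.
Lemma Csum_zero : forall {A} (F : A -> CC) l, (forall x, In x l -> F x = Czero) ->
  Csum (map F l) = Czero.
Proof. induction l; intros; simpl. auto. rewrite H, IHl. ring. intros; apply H; right; auto. left; auto. Qed.
Lemma Csum_seq_ind : forall len a y v, (a <= y < a + len)%nat ->
  Csum (map (fun i => if Nat.eq_dec i y then v else Czero) (seq a len)) = v.
Proof. induction len; intros; simpl. lia.
  destruct (Nat.eq_dec a y).
  - subst. rewrite Csum_zero. ring. intros x Hx. apply in_seq in Hx.
    destruct (Nat.eq_dec x y); [lia|auto].
  - rewrite IHlen. ring. lia. Qed.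

Fixpoint mle (a b : list nat) : Prop :=
  match a, b with
  | [], [] => True
  | x :: a', y :: b' => (x <= y)%nat /\ mle a' b'
  | _, _ => False
  end.

Lemma in_mi_below : forall b a, In a (mi_below b) -> mle a b.
Proof. induction b; intros.
  simpl in H. destruct H as [H|[]]. subst; simpl; auto.
  unfold mi_below in H; fold mi_below in H.
  apply in_flat_map in H. destruct H as [i [Hi Ha]]. apply in_map_iff in Ha.
  destruct Ha as [a' [<- Ha']]. apply in_seq in Hi. simpl. split. lia. auto. Qed.

Lemma mle_refl : forall b, mle b b.
Proof. induction b; simpl; auto. Qed.
Lemma mle_length : forall a b, mle a b -> length a = length b.
Proof. induction a; destruct b; simpl; intuition. Qed.
Lemma mle_size : forall a b, mle a b -> (mi_size a <= mi_size b)%nat.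
Proof. induction a; destruct b; simpl; intuition. specialize (IHa b H1). lia. Qed.
Lemma mle_size_eq : forall a b, mle a b -> mi_size a = mi_size b -> a = b.
Proof. induction a; destruct b; simpl; intuition.
  pose proof (mle_size _ _ H2). assert (a = n) by lia. subst. f_equal. apply IHa; auto. lia. Qed.
Lemma mi_sub_self : forall b, mi_sub b b = repeat 0%nat (length b).
Proof. induction b; simpl; auto. rewrite IHb. f_equal. lia. Qed.
Lemma mi_below_zero : forall n, mi_below (repeat 0%nat n) = [repeat 0%nat n].
Proof. induction n; simpl; auto. rewrite IHn. reflexivity. Qed.
Lemma mi_is_zero_repeat : forall n, mi_is_zero (repeat 0%nat n) = true.
Proof. induction n; simpl; auto. Qed.
Lemma mi_size_repeat : forall n, mi_size (repeat 0%nat n) = 0%nat.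
Proof. induction n; simpl; auto. Qed.

Lemma ind_sum : forall b D v, mle D b ->
  Csum (map (fun d => if list_eq_dec Nat.eq_dec d D then v else Czero) (mi_below b)) = v.
Proof. induction b; intros D v H.
  - destruct D; simpl in H; [|contradiction]. simpl. destruct (list_eq_dec Nat.eq_dec [] []); [ring|congruence].
  - destruct D as [|y D']; simpl in H; [contradiction|]. destruct H as [Hy HD].
    unfold mi_below; fold mi_below. rewrite Csum_flat_map.
    rewrite (Csum_ext_in _ (fun i => if Nat.eq_dec i y then v else Czero)).
    apply Csum_seq_ind; lia.
    intros i _. rewrite map_map. destruct (Nat.eq_dec i y).
    + subst. transitivity (Csum (map (fun d => if list_eq_dec Nat.eq_dec d D' then v else Czero) (mi_below b))); [|apply IHb; auto].
      apply Csum_ext_in. intros d _.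
      destruct (list_eq_dec Nat.eq_dec (y::d) (y::D')), (list_eq_dec Nat.eq_dec d D'); congruence.
    + apply Csum_zero. intros d _. destruct (list_eq_dec Nat.eq_dec (i::d) (y::D')); congruence.
Qed.

Definition phiP (b : nat -> PS) (g : list nat) : list CC :=
  match g with
  | 1%nat :: a => [Czero; b 1%nat a]
  | (S (S j)) :: a => [b (S (S j)) a]
  | _ => []
  end.
Definition PSoneP (a : list nat) : list CC := if mi_is_zero a then [Cone] else [].
Definition PSmulP (F G : list nat -> list CC) (bb : list nat) : list CC :=
  psum (map (fun a => pmul (F a) (G (mi_sub bb a))) (mi_below bb)).
Fixpoint PwP (b : nat -> PS) (i : nat) : list nat -> list CC :=
  match i with O => PSoneP | S i' => PSmulP (phiP b) (PwP b i') end.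
Definition composeP (b : nat -> PS) (f : PS) (g : list nat) : list CC :=
  match g with
  | [] => []
  | m :: _ => psum (flat_map (fun i => map (fun d => pscale (f (i :: d)) (PwP b i (mi_sub g d)))
                    (mi_below g)) (seq 0 (S m)))
  end.

Lemma phiP_eval : forall b s g, peval (phiP b g) s = phiS b s g.
Proof. intros b s [|[|[|j]] a]; simpl; ring. Qed.

Lemma PwP_eval : forall b s i g, peval (PwP b i g) s = PSpow (phiS b s) i g.
Proof. induction i; intros; simpl.
  - unfold PSoneP, PSone. destruct (mi_is_zero g); simpl; ring.
  - unfold PSmulP, PSmul. rewrite peval_psum, map_map. f_equal. apply map_ext. intros a.
    rewrite peval_pmul, phiP_eval, IHi. reflexivity. Qed.

Lemma map_flat_map_map : forall {A B C D} (H : C -> D) (F : A -> B -> C) (L : list B) l,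
  map H (flat_map (fun i => map (F i) L) l) = flat_map (fun i => map (fun d => H (F i d)) L) l.
Proof. induction l; simpl; auto. rewrite map_app, IHl, map_map. reflexivity. Qed.

Lemma compose_eval : forall b f s m bt,
  compose b f s (m :: bt) = peval (composeP b f (m :: bt)) s.
Proof. intros. unfold compose, composeP. rewrite peval_psum, map_flat_map_map.
  f_equal. apply flat_map_ext. intros i. apply map_ext. intros d.
  rewrite peval_pscale, PwP_eval. reflexivity. Qed.

Lemma length_PwP : forall b i g, (length (PwP b i g) <= S i)%nat.
Proof. induction i; intros; simpl.
  - unfold PSoneP. destruct (mi_is_zero g); simpl; lia.
  - unfold PSmulP. apply length_psum. intros p Hp. apply in_map_iff in Hp.
    destruct Hp as [a [<- _]]. eapply Nat.le_trans. apply length_pmul.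
    specialize (IHi (mi_sub g a)). assert (length (phiP b a) <= 2)%nat.
    { destruct a as [|[|[|j]] a]; simpl; lia. } lia. Qed.

Lemma length_composeP : forall b f m bt, (length (composeP b f (m :: bt)) <= S m)%nat.
Proof. intros. unfold composeP. apply length_psum. intros p Hp.
  apply in_flat_map in Hp. destruct Hp as [i [Hi Hp]]. apply in_map_iff in Hp.
  destruct Hp as [d [<- _]]. unfold pscale. rewrite length_map. apply in_seq in Hi.
  pose proof (length_PwP b i (mi_sub (m :: bt) d)). lia. Qed.

Lemma PwP_low : forall b i j dl e, (j < i)%nat -> pcoef (PwP b i (j :: dl)) e = Czero.
Proof. induction i; intros j dl e Hj. lia.
  simpl. unfold PSmulP. rewrite pcoef_psum, map_map. apply Csum_zero.
  intros a Ha. apply in_mi_below in Ha. destruct a as [|j1 a]; simpl in Ha; [contradiction|].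
  destruct Ha as [Hj1 _]. destruct j1 as [|j1].
  - simpl. apply pcoef_nil.
  - apply pmul_zero_r. intros e'. simpl mi_sub. apply IHi. lia. Qed.

Lemma PwP_diag : forall b n, b 1%nat (repeat 0%nat n) = Cone ->
  forall i e, pcoef (PwP b i (i :: repeat 0%nat n)) e = if Nat.eq_dec e i then Cone else Czero.
Proof. intros b n Hb1. induction i; intros e.
  - simpl. unfold PSoneP. simpl. rewrite mi_is_zero_repeat. simpl.
    destruct e; simpl. reflexivity. unfold pcoef. destruct e; reflexivity.
  - simpl. unfold PSmulP. rewrite pcoef_psum, map_map.
    unfold mi_below at 1; fold mi_below. rewrite mi_below_zero. rewrite Csum_flat_map.
    rewrite (Csum_ext_in _ (fun j => if Nat.eq_dec j 1 then (if Nat.eq_dec e (S i) then Cone else Czero) else Czero)).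
    apply Csum_seq_ind. lia.
    intros j Hj. simpl. rewrite mi_sub_self, repeat_length. apply in_seq in Hj.
    destruct j as [|[|j]].
    + simpl. rewrite pcoef_nil. ring.
    + simpl phiP. rewrite Nat.sub_0_r, Hb1. destruct (Nat.eq_dec 1 1) as [_|]; [|lia].
      cbn [pmul]. change (pshift []) with (@nil CC). rewrite pcoef_padd, pcoef_pscale. destruct e.
      * rewrite pcoef_pshift0. destruct (Nat.eq_dec 0 (S i)); [lia|]. ring.
      * rewrite pcoef_pshiftS, pcoef_padd, pcoef_pscale, pcoef_nil, (IHi e).
        destruct (Nat.eq_dec e i), (Nat.eq_dec (S e) (S i)); try lia; ring.
    + simpl phiP. rewrite pmul_zero_r. destruct (Nat.eq_dec (S (S j)) 1); [lia|]. ring.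
      intros e'. apply PwP_low. lia.
Qed.

Definition coefC (b : nat -> PS) (G : PS) (m : nat) (bt : list nat) (e : nat) : CC :=
  Csum (map (fun i => Csum (map (fun d => Cmul (G (i :: d)) (pcoef (PwP b i (mi_sub (m :: bt) d)) e))
     (mi_below (m :: bt)))) (seq 0 (S m))).

Lemma pcoef_composeP : forall b G m bt e, pcoef (composeP b G (m :: bt)) e = coefC b G m bt e.
Proof. intros. unfold composeP, coefC. rewrite pcoef_psum, Csum_flat_map.
  apply Csum_ext_in. intros i _. rewrite map_map. apply Csum_ext_in. intros d _.
  apply pcoef_pscale. Qed.

Definition val (b : nat -> PS) (q : nat -> list nat -> list CC) (G : PS) (idx : list nat) : CC :=
  match idx with
  | i :: k :: al => Csub (pcoef (q (i + k)%nat al) i) (coefC b G (i + k)%nat al i)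
  | _ => Czero
  end.
Fixpoint gW (b : nat -> PS) (q : nat -> list nat -> list CC) (w : nat) : PS :=
  match w with
  | O => fun _ => Czero
  | S w' => fun idx => if Nat.eq_dec (mi_size idx) w' then val b q (gW b q w') idx else gW b q w' idx
  end.
Definition gsol b q : PS := fun idx => gW b q (S (mi_size idx)) idx.

Lemma gW_zero : forall b q w idx, (w <= mi_size idx)%nat -> gW b q w idx = Czero.
Proof. induction w; intros; simpl. auto. destruct (Nat.eq_dec (mi_size idx) w). lia. apply IHw. lia. Qed.
Lemma gW_stable : forall b q w idx, (mi_size idx < w)%nat -> gW b q w idx = gsol b q idx.
Proof. induction w; intros. lia. unfold gsol.
  destruct (Nat.eq_dec (mi_size idx) w). subst. reflexivity.
  simpl. destruct (Nat.eq_dec (mi_size idx) w). lia. apply IHw. lia. Qed.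
Lemma gsol_eq : forall b q idx, gsol b q idx = val b q (gW b q (mi_size idx)) idx.
Proof. intros. unfold gsol. simpl. destruct (Nat.eq_dec (mi_size idx) (mi_size idx)); congruence. Qed.

Lemma pcoef_len : forall p e, (length p <= e)%nat -> pcoef p e = Czero.
Proof. intros. unfold pcoef. apply nth_overflow. auto. Qed.

Lemma solve_coef : forall b n q, b 1%nat (repeat 0%nat n) = Cone ->
  (forall m bt, (length (q m bt) <= S m)%nat) ->
  forall m bt e, length bt = n -> coefC b (gsol b q) m bt e = pcoef (q m bt) e.
Proof.
  intros b n q Hb1 Hq m bt e Hbt.
  destruct (le_lt_dec e m) as [Hem|Hem].
  2:{ rewrite (pcoef_len (q m bt)). 2:{ specialize (Hq m bt). lia. }
      unfold coefC. apply Csum_zero. intros i Hi. apply in_seq in Hi. apply Csum_zero.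
      intros d _. rewrite pcoef_len. ring. pose proof (length_PwP b i (mi_sub (m :: bt) d)). lia. }
  set (w := (m + mi_size bt)%nat).
  set (g := gsol b q).
  set (gv := g (e :: (m - e)%nat :: bt)).
  set (L := mi_below (m :: bt)).
  set (T := fun (G : PS) i d => Cmul (G (i :: d)) (pcoef (PwP b i (mi_sub (m :: bt) d)) e)).
  set (Ind := fun i d => if Nat.eq_dec i e then
                  (if list_eq_dec Nat.eq_dec d ((m - e)%nat :: bt) then gv else Czero) else Czero).
  assert (Hterm : forall i d, In i (seq 0 (S m)) -> In d L -> T g i d = Cadd (T (gW b q w) i d) (Ind i d)).
  { intros i d Hi Hd. apply in_seq in Hi. apply in_mi_below in Hd.
    destruct d as [|k al]; simpl in Hd; [contradiction|]. destruct Hd as [Hk Hal].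
    unfold T, Ind. simpl mi_sub.
    destruct (lt_dec (mi_size (i :: k :: al)) w) as [Hlt|Hge].
    - rewrite (gW_stable b q w). 2: auto. fold g.
      destruct (Nat.eq_dec i e); [|ring].
      destruct (list_eq_dec Nat.eq_dec (k :: al) ((m - e)%nat :: bt)); [|ring].
      exfalso. injection e1 as Hk' Hal'. rewrite Hal' in Hlt. simpl in Hlt. unfold w in Hlt. lia.
    - rewrite (gW_zero b q w). 2: lia.
      destruct (le_lt_dec (i + k) m) as [Hik|Hik].
      + pose proof (mle_size _ _ Hal). simpl in Hge. unfold w in Hge.
        assert (i + k = m)%nat by lia. assert (mi_size al = mi_size bt) by lia.
        pose proof (mle_size_eq _ _ Hal H1). subst al.
        rewrite mi_sub_self, Hbt. replace (m - k)%nat with i by lia.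
        rewrite (PwP_diag b n Hb1).
        destruct (Nat.eq_dec e i), (Nat.eq_dec i e); try lia.
        * subst i. destruct (list_eq_dec Nat.eq_dec (k :: bt) ((m - e)%nat :: bt)).
          -- unfold gv. rewrite <- e0. ring.
          -- exfalso. apply n0. f_equal. lia.
        * ring.
      + rewrite PwP_low. 2: lia.
        destruct (Nat.eq_dec i e); [|ring].
        destruct (list_eq_dec Nat.eq_dec (k :: al) ((m - e)%nat :: bt)); [|ring].
        exfalso. injection e1 as Hk' Hal'. lia. }
  assert (Hdec : coefC b g m bt e = Cadd (coefC b (gW b q w) m bt e) gv).
  { unfold coefC. fold L.
    rewrite (Csum_ext_in _ (fun i => Cadd (Csum (map (fun d => T (gW b q w) i d) L))
                                         (Csum (map (fun d => Ind i d) L)))).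
    2:{ intros i Hi. rewrite <- Csum_map_add. apply Csum_ext_in. intros d Hd.
        apply (Hterm i d Hi Hd). }
    rewrite Csum_map_add. f_equal.
    rewrite (Csum_ext_in _ (fun i => if Nat.eq_dec i e then gv else Czero)).
    apply Csum_seq_ind. lia.
    intros i _. unfold Ind. destruct (Nat.eq_dec i e).
    - apply ind_sum. simpl. split. lia. apply mle_refl.
    - apply Csum_zero. auto. }
  rewrite Hdec. unfold gv, g. rewrite gsol_eq. simpl val.
  replace (e + (m - e))%nat with m by lia.
  replace (mi_size (e :: (m - e)%nat :: bt)) with w by (simpl; unfold w; lia).
  replace (e + (m - e + mi_size bt))%nat with w by (unfold w; lia).
  unfold Csub. ring.
Qed.

Lemma solve : forall b n q, b 1%nat (repeat 0%nat n) = Cone ->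
  (forall m bt, (length (q m bt) <= S m)%nat) ->
  exists g : PS, forall s m bt, length bt = n -> compose b g s (m :: bt) = peval (q m bt) s.
Proof. intros b n q Hb1 Hq. exists (gsol b q). intros s m bt Hbt.
  rewrite compose_eval. apply peval_coef_ext. intros e.
  rewrite pcoef_composeP. eapply solve_coef; eauto. Qed.

Lemma Cnorm_ge0 : forall a, 0 <= Cnorm a.
Proof. intros; apply sqrt_pos. Qed.
Lemma Cnorm_zero : Cnorm Czero = 0.
Proof. unfold Cnorm; simpl. replace (0*(0*1)+0*(0*1)) with 0 by ring. apply sqrt_0. Qed.
Lemma Cnorm_mul : forall a b, Cnorm (Cmul a b) = Cnorm a * Cnorm b.
Proof. intros [a1 a2] [b1 b2]. unfold Cnorm; simpl. rewrite <- sqrt_mult by nra.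
  f_equal. ring. Qed.
Lemma Cnorm_real : forall r, Cnorm (mkC r 0) = Rabs r.
Proof. intros. unfold Cnorm; simpl. replace (r*(r*1)+0*(0*1)) with (Rsqr r) by (unfold Rsqr; ring).
  apply sqrt_Rsqr_abs. Qed.
Lemma Cnorm_pow : forall s m, Cnorm (Cpow s m) = Cnorm s ^ m.
Proof. induction m; simpl. unfold Cnorm; simpl. replace (1*(1*1)+0*(0*1)) with 1 by ring. apply sqrt_1.
  rewrite Cnorm_mul, IHm. reflexivity. Qed.
Lemma Cnorm_eq0 : forall a, Cnorm a = 0 -> a = Czero.
Proof. intros [a1 a2] H. unfold Cnorm in H; simpl in H. apply sqrt_eq_0 in H; [|nra].
  apply CC_ext; simpl; nra. Qed.

Lemma conv_ext : forall N F G, (forall a, length a = N -> F a = G a) -> Convergent N F -> Convergent N G.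
Proof. intros N F G H [K HK]. exists K. intros a Ha Hz. rewrite <- H; auto. Qed.

Lemma conv_norm : forall N F, Convergent N F -> exists M, 1 <= M /\
  forall a, length a = N -> mi_is_zero a = false -> Cnorm (F a) <= M ^ mi_size a.
Proof. intros N F [K HK]. exists (Rmax 1 (Rabs K)). split. apply Rmax_l.
  intros a Ha Hz. eapply Rle_trans. apply HK; auto. eapply Rle_trans. apply pow_Rabs.
  apply pow_incr. split. apply Rabs_pos. apply Rmax_r. Qed.

Lemma growth : forall M r, 0 < r -> exists m, (1 <= m)%nat /\ M ^ m < INR (fact m) * r ^ m.
Proof. intros M r Hr. pose proof (cv_speed_pow_fact (Rabs M / r)) as H.
  destruct (H 1 Rlt_0_1) as [N HN]. exists (S N). split. lia.
  specialize (HN (S N) ltac:(lia)). unfold R_dist in HN. rewrite Rminus_0_r in HN.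
  pose proof (Rle_abs ((Rabs M / r) ^ S N / INR (fact (S N)))).
  pose proof (INR_fact_lt_0 (S N)).
  assert (Hx : (Rabs M / r) ^ S N < INR (fact (S N))).
  { apply (Rmult_lt_reg_r (/ INR (fact (S N)))). apply Rinv_0_lt_compat; auto.
    rewrite Rinv_r by lra. unfold Rdiv in H0 at 2. lra. }
  assert (Habs : Rabs M = (Rabs M / r) * r) by (field; lra).
  eapply Rle_lt_trans. apply pow_Rabs. rewrite Habs, Rpow_mult_distr.
  apply Rmult_lt_compat_r. apply pow_lt; auto. auto. Qed.

Lemma zero_cons : forall x l, mi_is_zero (x :: l) = andb (Nat.eqb 0 x) (mi_is_zero l).
Proof. reflexivity. Qed.

Lemma peval_mono : forall m c s, peval (repeat Czero m ++ [c]) s = Cmul c (Cpow s m).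
Proof. induction m; intros; simpl. ring. rewrite IHm. ring. Qed.

Lemma partP : forall n b (f : PS) cs, b 1%nat (repeat 0%nat n) = Cone ->
  exists g : PS, forall s, Conv n b g s <-> Conv n b f (monic_eval cs s).
Proof.
  intros n b f cs Hb1. unfold Conv.
  destruct cs as [|c0 cs'].
  - destruct (solve b n (fun m bt => [compose b f Cone (m :: bt)]) Hb1) as [g Hg].
    { intros; simpl; lia. }
    exists g. intros s. simpl monic_eval. split; apply conv_ext.
    + intros [|m bt] Ha; simpl in Ha; try lia. rewrite Hg by lia. simpl. ring.
    + intros [|m bt] Ha; simpl in Ha; try lia. rewrite Hg by lia. simpl. ring.
  - set (cs := c0 :: cs'). set (d := length cs). set (Pl := cs ++ [Cone]).
    assert (Hd : d <> 0%nat) by (unfold d, cs; simpl; lia).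
    assert (HPl : length Pl = S d) by (unfold Pl, d; rewrite length_app; simpl; lia).
    destruct (solve b n (fun m bt => if Nat.eq_dec (m mod d) 0 then pcomp (composeP b f ((m / d)%nat :: bt)) Pl else []) Hb1) as [g Hg].
    { intros m bt. destruct (Nat.eq_dec (m mod d) 0); [|simpl; lia].
      eapply Nat.le_trans. apply (length_pcomp _ Pl d HPl).
      pose proof (length_composeP b f (m / d) bt). pose proof (Nat.Div0.mul_div_le m d). nia. }
    assert (Hgood : forall s m' bt, length bt = n ->
      compose b g s ((d * m')%nat :: bt) = compose b f (monic_eval cs s) (m' :: bt)).
    { intros s m' bt Hbt. rewrite Hg by auto.
      rewrite Nat.mul_comm, Nat.Div0.mod_mul, Nat.div_mul by auto.
      destruct (Nat.eq_dec 0 0); [|congruence].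
      rewrite peval_pcomp, compose_eval, monic_peval. reflexivity. }
    assert (Hbad : forall s m bt, length bt = n -> (m mod d <> 0)%nat -> compose b g s (m :: bt) = Czero).
    { intros s m bt Hbt Hm. rewrite Hg by auto. destruct (Nat.eq_dec (m mod d) 0); [congruence|]. reflexivity. }
    exists g. intros s. fold cs. split; intros Hc; apply conv_norm in Hc; destruct Hc as [M [HM HMb]].
    + exists (M ^ d). intros [|m' bt] Ha Hz; simpl in Ha; [lia|]. injection Ha as Ha.
      rewrite <- Hgood by auto.
      eapply Rle_trans. apply HMb. simpl; lia.
      rewrite zero_cons in *. destruct m'; simpl in Hz |- *. rewrite Nat.mul_0_r. simpl. auto.
      destruct (d * S m')%nat eqn:E; [lia|]. reflexivity.
      rewrite <- pow_mult. apply Rle_pow; auto. simpl. nia.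
    + exists M. intros [|m bt] Ha Hz; simpl in Ha; [lia|]. injection Ha as Ha.
      destruct (Nat.eq_dec (m mod d) 0) as [Hm|Hm].
      * pose proof (Nat.div_mod_eq m d) as Hdm. rewrite Hm, Nat.add_0_r in Hdm.
        rewrite Hdm, Hgood by auto. eapply Rle_trans. apply HMb. simpl; lia.
        rewrite zero_cons in *. destruct (m / d)%nat eqn:E; simpl in Hz |- *.
        rewrite Nat.mul_0_r in Hdm. subst m. simpl in Hz. auto. reflexivity.
        apply Rle_pow; auto. simpl. nia.
      * rewrite Hbad by auto. rewrite Cnorm_zero. apply pow_le. lra.
Qed.

Definition Cinv (a : CC) : CC :=
  mkC (Re a / (Re a ^ 2 + Im a ^ 2)) (- Im a / (Re a ^ 2 + Im a ^ 2)).
Lemma Cinv_r : forall a, a <> Czero -> Cmul a (Cinv a) = Cone.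
Proof. intros a Ha. assert (Hd : Re a ^ 2 + Im a ^ 2 <> 0).
  { intro H. apply Ha. destruct a; apply CC_ext; simpl in *; nra. }
  apply CC_ext; unfold Cinv; simpl; field; simpl in Hd; intro HH; apply Hd; nra. Qed.

Definition cfact (m : nat) : CC := mkC (INR (fact m)) 0.

Lemma partLam : forall n b (f : PS) lam, b 1%nat (repeat 0%nat n) = Cone ->
  exists h : PS, forall s, Conv n b h s <-> exists s', Conv n b f s' /\ s = Cmul lam s'.
Proof.
  intros n b f lam Hb1. unfold Conv.
  destruct (classic (lam = Czero)) as [Hl|Hl].
  - subst lam. destruct (classic (exists s0, Convergent (S n) (compose b f s0))) as [[s0 Hs0]|Hno].
    + destruct (solve b n (fun m bt => if mi_is_zero bt then repeat Czero m ++ [cfact m] else []) Hb1) as [h Hh].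
      { intros m bt. destruct (mi_is_zero bt); simpl; [|lia]. rewrite length_app, repeat_length. simpl; lia. }
      exists h. intros s. split.
      * intros Hc. exists s0. split; auto.
        destruct (classic (s = Czero)) as [Hs|Hs]. subst; ring.
        exfalso. apply conv_norm in Hc. destruct Hc as [M [HM HMb]].
        assert (Hr : 0 < Cnorm s).
        { destruct (Cnorm_ge0 s); auto. exfalso; apply Hs, Cnorm_eq0; auto. }
        destruct (growth M (Cnorm s) Hr) as [m [Hm Hlt]].
        assert (HH := HMb (m :: repeat 0%nat n) ltac:(simpl; rewrite repeat_length; auto)
                         ltac:(destruct m; [lia|reflexivity])).
        rewrite Hh in HH by (apply repeat_length).
        rewrite mi_is_zero_repeat, peval_mono in HH. unfold cfact in HH.
        rewrite Cnorm_mul, Cnorm_real, Cnorm_pow in HH.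
        simpl mi_size in HH. rewrite mi_size_repeat, Nat.add_0_r in HH.
        rewrite Rabs_right in HH by (apply Rle_ge, pos_INR). lra.
      * intros [s' [_ ->]]. exists 1. intros [|m bt] Ha Hz; simpl in Ha; [lia|]. injection Ha as Ha.
        rewrite Hh by auto. rewrite pow1. rewrite zero_cons in Hz.
        destruct (mi_is_zero bt). destruct m; [simpl in Hz; discriminate|].
        rewrite peval_mono. simpl. replace (Cmul (cfact (S m)) (Cmul (Cmul Czero s') (Cpow (Cmul Czero s') m))) with Czero by ring.
        rewrite Cnorm_zero; lra. simpl. rewrite Cnorm_zero; lra.
    + destruct (solve b n (fun m bt => if mi_is_zero bt then [cfact m] else []) Hb1) as [h Hh].
      { intros m bt. destruct (mi_is_zero bt); simpl; lia. }
      exists h. intros s. split.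
      * intros Hc. exfalso. apply conv_norm in Hc. destruct Hc as [M [HM HMb]].
        destruct (growth M 1 Rlt_0_1) as [m [Hm Hlt]]. rewrite pow1, Rmult_1_r in Hlt.
        assert (HH := HMb (m :: repeat 0%nat n) ltac:(simpl; rewrite repeat_length; auto)
                         ltac:(destruct m; [lia|reflexivity])).
        rewrite Hh in HH by (apply repeat_length).
        rewrite mi_is_zero_repeat in HH. unfold cfact in HH. simpl peval in HH.
        replace (Cadd {| Re := INR (fact m); Im := 0 |} (Cmul s Czero)) with {| Re := INR (fact m); Im := 0 |} in HH by ring.
        rewrite Cnorm_real in HH.
        simpl mi_size in HH. rewrite mi_size_repeat, Nat.add_0_r in HH.
        rewrite Rabs_right in HH by (apply Rle_ge, pos_INR). lra.
      * intros [s' [Hs' _]]. exfalso. apply Hno. eauto.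
  - set (c := Cinv lam).
    destruct (solve b n (fun m bt => pscv c (composeP b f (m :: bt))) Hb1) as [h Hh].
    { intros m bt. rewrite length_pscv. apply length_composeP. }
    exists h. intros s. split.
    + intros Hc. exists (Cmul c s). split.
      * revert Hc. apply conv_ext. intros [|m bt] Ha; simpl in Ha; [lia|]. injection Ha as Ha.
        rewrite Hh by auto. rewrite peval_pscv, compose_eval. reflexivity.
      * transitivity (Cmul (Cmul lam c) s). unfold c; rewrite Cinv_r by auto. ring. ring.
    + intros [s' [Hs' ->]]. revert Hs'. apply conv_ext. intros [|m bt] Ha; simpl in Ha; [lia|]. injection Ha as Ha.
      rewrite Hh by auto. rewrite peval_pscv, compose_eval.
      replace (Cmul c (Cmul lam s')) with (Cmul (Cmul lam c) s') by ring.
      unfold c; rewrite Cinv_r by auto. f_equal. ring.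
Qed.

Theorem mainTheorem6 (n : nat) (b : nat -> PS)
  (Hb : forall j : nat, (1 <= j)%nat -> Convergent n (b j))
  (Hphi : Convergent (S n) (phiTX b))
  (Hb1 : b 1%nat (repeat 0%nat n) = Cone)
  (f : PS) (lam : CC) (cs : list CC) :
  exists g h : PS,
    (forall s : CC, Conv n b g s <-> Conv n b f (monic_eval cs s)) /\
    (forall s : CC, Conv n b h s <-> exists s' : CC, Conv n b f s' /\ s = Cmul lam s').
Proof.
  destruct (partP n b f cs Hb1) as [g Hg].
  destruct (partLam n b f lam Hb1) as [h Hh].
  exists g, h. split; auto.
Qed.
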